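(* Let $q\ge2$ be a prime power, $d\ge6$, $2\le j\le d$ and $1\le i\le d-3$. Then $|T_{h-1}(i,j)|<|T_h(i,j)|$ for every $h=1,\dots,h_{\max}(i,j)$, where $h_{\max}(i,j)=\min\{j,d-i\}$.
   Context: Let $b=-q$. For integers $m\ge0$ and $l$, ${m\brack l}_b=\prod_{t=1}^{l}\frac{b^{m-t+1}-1}{b^t-1}$ for $l\ge0$ and $0$ for $l<0$. For $0\le i,j\le d$, $$Q_j(i)=\sum_{h=0}^{\min\{j,d-i\}}(-1)^j(-q)^{\binom{j-h}{2}+hd}{d-h\brack d-j}_b{d-i\brack h}_b,$$ the eigenvalues of the Hermitian forms graph $Q_q(d,j)$. $T_h(i,j)$ denotes the $h$-th summand (including the factor $(-1)^j$). *)

(* Defs.v *)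
From mathcomp Require Import all_boot all_order all_algebra.
Set Implicit Arguments. Unset Strict Implicit. Unset Printing Implicit Defensive.
Import Order.TTheory GRing.Theory Num.Theory.
Local Open Scope ring_scope.

Definition gbin (b : rat) (m l : nat) : rat :=
  \prod_(1 <= t < l.+1) ((b ^+ (m - t + 1)%N - 1) / (b ^+ t - 1)).

(* h-th summand of Q_j(i), with b = -q, including the factor (-1)^j. *)
Definition Tsum (q d i j h : nat) : rat :=
  let b := - (q%:R : rat) in
  (-1) ^+ j * b ^+ ('C(j - h, 2) + h * d)%N
    * gbin b (d - h) (d - j) * gbin b (d - i) h.

Definition hmax (d i j : nat) : nat := minn j (d - i).

(* Main.v *)
Require Import Defs.
From mathcomp Require Import all_boot all_order all_algebra.
From mathcomp Require Import lra ring zify.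
Import Order.TTheory GRing.Theory Num.Theory.
Local Open Scope ring_scope.

Section S.
Variable Q : rat.
Hypothesis Q2 : 2 <= Q.
Local Notation b := (- Q).

Lemma nb : `|b| = Q.
Proof. rewrite normrN ger0_norm //; have := Q2; lra. Qed.

Lemma Qpow_ge {t : nat} : (1 <= t)%N -> Q <= Q ^+ t.
Proof. move=> t1; rewrite -{1}(expr1 Q); apply: ler_weXn2l => //; have := Q2; lra. Qed.

Lemma lowb (t : nat) : Q ^+ t - 1 <= `|b ^+ t - 1|.
Proof. by have := lerB_dist (b ^+ t) 1; rewrite normrX nb normr1. Qed.

Lemma upb (t : nat) : `|b ^+ t - 1| <= Q ^+ t + 1.
Proof. by have := ler_normB (b ^+ t) 1; rewrite normrX nb normr1. Qed.

Lemma nz (t : nat) : (1 <= t)%N -> b ^+ t - 1 != 0.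
Proof.
move=> t1; rewrite -normr_gt0; have := lowb t; have := Qpow_ge (t:=t) t1; have := Q2; lra.
Qed.

Lemma G2rec m g : gbin b m g.+1 = gbin b m g * ((b ^+ (m - g.+1 + 1) - 1) / (b ^+ g.+1 - 1)).
Proof. by rewrite /gbin big_nat_recr. Qed.

Lemma G1rec m l : (l <= m)%N ->
  gbin b m.+1 l * (b ^+ (m - l + 1) - 1) = gbin b m l * (b ^+ m.+1 - 1).
Proof.
elim: l => [|l IH] lm.
  by rewrite /gbin !big_geq // subn0 addn1.
rewrite !G2rec.
have e1 : (m.+1 - l.+1 + 1 = m - l + 1)%N by rewrite subSS.
have e2 : (m - l.+1 + 1 = m - l)%N by rewrite addn1 subnSK.
rewrite e1 e2.
have IH' := IH (ltnW lm).
have D := @nz l.+1 isT.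
transitivity (gbin b m.+1 l * (b ^+ (m - l + 1) - 1) * ((b ^+ (m - l) - 1) / (b ^+ l.+1 - 1))).
  by ring.
by rewrite IH'; ring.
Qed.

End S.
Lemma key (Q Y X A C M H : rat) : 2 <= Q -> 4 <= Y -> 3 <= C -> M*H <= Q*Y + 2*Y + 1 -> 0 <= M -> 0<=H ->
 ((X = 1 /\ A = Q+1) \/ (Q <= X /\ Q*X - 1 <= A)) -> X*(M*H) < Y*A*C.
Proof.
move=> q2 y4 c3 mh m0 h0 [[-> ->]|[qx ax]].
  rewrite mul1r.
  have : Y*(Q+1)*3 <= Y*(Q+1)*C by apply: ler_pM; nra.
  have : 0 <= Q * Y by nra.
  lra.
have x2 : 2 <= X by lra.
have a0 : 0 <= A by nra.
have h1 : Y*(Q*X-1)*3 <= Y*A*C.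
  have qx4 : 4 <= Q*X by nra.
  apply: ler_pM; [apply: mulr_ge0; lra|lra| |lra]. apply: ler_pM; lra.
have h2 : X*(M*H) <= X*(Q*Y+2*Y+1) by apply: ler_pM; nra.
have e0 : 2 * (X*Y) <= Q*(X*Y) by apply: ler_pM; nra.
have e1 : 0 <= (X-2)*(Y-4) by apply: mulr_ge0; lra.
have e2 : 2*(X*Y) - 3*Y - X > 0 by nra.
lra.
Qed.

Lemma sq4 (Q : rat) : 2 <= Q -> 4 <= Q * Q.
Proof. move=> h; nra. Qed.

Lemma gbin_nz (Q : rat) m l : 2 <= Q -> gbin (- Q) m l != 0.
Proof.
move=> Q2; rewrite /gbin big_seq; apply: (big_ind (fun x => x != 0)) => //.
  by move=> x y; apply: mulf_neq0.
move=> t; rewrite mem_index_iota => /andP[t1 _].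
by rewrite mulf_neq0 ?invr_neq0 ?nz // addn1.
Qed.

Theorem lemma5p2 (p k q d i j : nat) :
  prime p -> (0 < k)%N -> q = (p ^ k)%N ->
  (6 <= d)%N -> (2 <= j <= d)%N -> (1 <= i <= d - 3)%N ->
  forall h : nat, (1 <= h <= hmax d i j)%N ->
    `|Tsum q d i j h.-1| < `|Tsum q d i j h|.
Proof.
move=> pp k0 qe d6 /andP[j2 jd] /andP[i1 id] h /andP[h1 hm].
have q2n : (2 <= q)%N.
  rewrite qe; apply: (leq_trans (prime_gt1 pp)).
  by rewrite -{1}(expn1 p) leq_pexp2l // prime_gt0.
set Q : rat := q%:R.
have Q2 : 2 <= Q by rewrite /Q (ler_nat _ 2 q).
move: hm; rewrite /hmax leq_min => /andP[hj hdi].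
case: h h1 hj hdi => // g _ hj hdi /=.
have e0 : ('C(j - g, 2) + g*d = 'C(j-g.+1,2) + g*d + (j - g.+1))%N.
  rewrite -[(j - g)%N]subSS subSn // binS bin1; lia.
have e1 : ('C(j - g.+1, 2) + g.+1*d = 'C(j-g.+1,2) + g*d + d)%N by rewrite mulSn; lia.
have e2 : (d - i - g.+1 + 1 = d - i - g)%N by lia.
have R := @G1rec Q Q2 (d - g.+1) (d - j) ltac:(lia).
have e3 : (d - g.+1).+1 = (d - g)%N by lia.
have e4 : (d - g.+1 - (d - j) + 1 = j - g)%N by lia.
rewrite e3 e4 in R.
have ID : Tsum q d i j g.+1 * ((-Q)^+(j-g.+1) * ((-Q)^+(d-g) - 1) * ((-Q)^+g.+1 - 1))
   = Tsum q d i j g * ((-Q)^+d * ((-Q)^+(j-g) - 1) * ((-Q)^+(d-i-g) - 1)).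
  rewrite /Tsum /= -/Q e0 e1 !exprD G2rec e2.
  have Hn := @nz Q Q2 g.+1 isT.
  set G1a := gbin _ (d - g.+1) _; set G1b := gbin _ (d - g) _.
  set G2 := gbin _ (d - i) g.
  set Hh := (- Q) ^+ g.+1 - 1.
  set Md := (- Q) ^+ (d - g) - 1.
  set Aj := (- Q) ^+ (j - g) - 1.
  set Cc := (- Q) ^+ (d - i - g) - 1.
  set P := (- Q) ^+ 'C(j - g.+1, 2).
  transitivity ((-1) ^+ j * P * (-Q)^+(g*d) * (-Q)^+d * (-Q)^+(j-g.+1) * G2 * Cc * (G1a * Md) * (Hh / Hh)).
    by ring.
  rewrite divff // mulr1 -R -/G1b -/Aj; clearbody G1a G1b G2 Hh Md Aj Cc P; ring.
have T0nz : Tsum q d i j g != 0.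
  have Q0 : - Q != 0 by rewrite oppr_eq0; apply/eqP => E; move: Q2; rewrite E; lra.
  rewrite /Tsum /= -/Q !mulf_neq0 ?(@gbin_nz Q _ _ Q2) ?expf_neq0 //.
move: ID T0nz; generalize (Tsum q d i j g.+1) (Tsum q d i j g) => T1 T0 ID T0nz.
have NID := congr1 (fun x : rat => `|x|) ID.
rewrite !normrM !normrX (@nb Q Q2) in NID.
have nzpos : forall t, (1 <= t)%N -> 0 < `|(- Q) ^+ t - 1|.
  by move=> t t1; rewrite normr_gt0 (@nz Q Q2).
have M0 := nzpos (d - g)%N ltac:(lia).
have H0 := nzpos g.+1 isT.
have X0 : 0 < Q ^+ (j - g.+1) by apply: exprn_gt0; lra.
have Y4 : 4 <= Q ^+ d.
  have : Q ^+ 2 <= Q ^+ d by apply: ler_weXn2l; [lra|lia].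
  rewrite expr2; have := @sq4 Q Q2; lra.
have C3 : 3 <= `|(- Q) ^+ (d - i - g) - 1|.
  case E : (d - i - g)%N => [|c]; first by lia.
  case: c E => [|c] E.
    by rewrite expr1 -opprD normrN ger0_norm; lra.
  have := @lowb Q Q2 c.+2; have : Q ^+ 2 <= Q ^+ c.+2 by apply: ler_weXn2l => //; lra.
  rewrite expr2; have := @sq4 Q Q2; lra.
have MH : `|(- Q) ^+ (d - g) - 1| * `|(- Q) ^+ g.+1 - 1| <= Q * Q ^+ d + 2 * Q ^+ d + 1.
  have h1 := @upb Q Q2 (d - g); have h2 := @upb Q Q2 g.+1.
  have : `|(- Q) ^+ (d - g) - 1| * `|(- Q) ^+ g.+1 - 1| <= (Q ^+ (d - g) + 1) * (Q ^+ g.+1 + 1).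
    by apply: ler_pM; lra.
  have pe : Q ^+ (d - g) * Q ^+ g.+1 = Q * Q ^+ d by rewrite -exprD -exprS; congr (_ ^+ _); lia.
  have : Q ^+ (d - g) <= Q ^+ d by apply: ler_weXn2l; [lra|lia].
  have : Q ^+ g.+1 <= Q ^+ d by apply: ler_weXn2l; [lra|lia].
  move=> a1 a2 a3; lra.
have AX : (Q ^+ (j - g.+1) = 1 /\ `|(- Q) ^+ (j - g) - 1| = Q + 1) \/
          (Q <= Q ^+ (j - g.+1) /\ Q * Q ^+ (j - g.+1) - 1 <= `|(- Q) ^+ (j - g) - 1|).
  case E : (j - g.+1)%N => [|c].
    have -> : (j - g = 1)%N by lia.
    left; split; first by rewrite expr0.
    by rewrite expr1 -opprD normrN ger0_norm; lra.
  right; split; first by apply: (@Qpow_ge Q Q2).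
  have -> : (j - g = c.+2)%N by lia.
  by rewrite -exprS; apply: (@lowb Q Q2).
have K := @key Q _ _ _ _ _ _ Q2 Y4 C3 MH (ltW M0) (ltW H0) AX.
have T0p : 0 < `|T0| by rewrite normr_gt0.
set D' := Q ^+ (j - g.+1) * `|(- Q) ^+ (d - g) - 1| * `|(- Q) ^+ g.+1 - 1|.
have D0 : 0 < D' by rewrite /D' !mulr_gt0.
rewrite -(ltr_pM2r D0) /D' NID.
rewrite ltr_pM2l // -mulrA.
by move: K; rewrite !mulrA.
Qed.
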